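(* Let $n\ge1$ and let $X$ be a lazy simple random walk on the cycle $\mathbb{Z}_n=\{0,1,\dots,n-1\}$. Then for every $\alpha\in(0,1)$, \[ t_{\mathrm{H}}(\alpha)=t_{\mathrm{mov}}(\alpha). \]
   Context: The lazy simple random walk on $\mathbb{Z}_n$ stays put with probability $1/2$ and otherwise moves to $x+1$ or $x-1$ (mod $n$) with probability $1/4$ each; $\pi$ denotes its stationary (uniform) distribution. For a set $A$, $\tau_A=\inf\{t\ge0:X_t\in A\}$ and $t_{\mathrm{H}}(\alpha)=\max_{x,\,A:\pi(A)\ge\alpha}\mathbb{E}_x[\tau_A]$. Let $\mathcal{A}(\alpha)$ be the set of sequences $A=(A_t)_{t\ge0}$ of subsets of $\mathbb{Z}_n$ with $\pi(A_t)\ge\alpha$ for all $t$; for such $A$ let $\tau_A=\inf\{t\ge0:X_t\in A_t\}$ and $t_{\mathrm{mov}}(\alpha)=\sup_{x,\,A\in\mathcal{A}(\alpha)}\mathbb{E}_x[\tau_A]$. *)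

(* Defs.v *)
From HB Require Import structures.
From mathcomp Require Import all_boot all_order all_algebra.
From mathcomp Require Import all_classical all_reals.
From mathcomp Require Import ereal topology normedtype sequences.
Set Implicit Arguments. Unset Strict Implicit. Unset Printing Implicit Defensive.
Import Order.TTheory GRing.Theory Num.Theory.
Local Open Scope ring_scope.

Section LazyCycle.
Variables (R : realType) (n : nat).

Definition cyc_succ (z : 'I_n) : nat := (z.+1 %% n)%N.
Definition cyc_pred (z : 'I_n) : nat := ((z + n).-1 %% n)%N.

(* transition kernel: stay w.p. 1/2, move to z+1 or z-1 (mod n) w.p. 1/4 each
   (indicators are added, so coinciding targets for n = 1, 2 are handled) *)
Definition lazyP (z y : 'I_n) : R :=
  (z == y)%:R / 2 + (cyc_succ z == y)%:R / 4 + (cyc_pred z == y)%:R / 4.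

Definition piU (A : {set 'I_n}) : R := #|A|%:R / n%:R.

(* sub-probability vector of the chain started at x, killed upon
   hitting the moving target: q t y = P_x(X_t = y, X_s \notin A_s for s <= t) *)
Fixpoint surv_vec (x : 'I_n) (A : nat -> {set 'I_n}) (t : nat) : 'I_n -> R :=
  match t with
  | 0 => fun y => ((y == x) && (y \notin A 0%N))%:R
  | t'.+1 => fun y => (y \notin A t)%:R *
                      \sum_(z : 'I_n) surv_vec x A t' z * lazyP z y
  end.

Definition surv_prob (x : 'I_n) (A : nat -> {set 'I_n}) (t : nat) : R :=
  \sum_(y : 'I_n) surv_vec x A t y.

(* E_x[tau_A] = \sum_{t >= 0} P_x(tau_A > t)  (in the extended reals) *)
Definition exp_hit (x : 'I_n) (A : nat -> {set 'I_n}) : \bar R :=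
  limn (fun N : nat => (\sum_(0 <= t < N) (surv_prob x A t)%:E)%E).

Definition t_H (alpha : R) : \bar R :=
  ereal_sup [set e | exists (x : 'I_n) (A : {set 'I_n}),
                       alpha <= piU A /\ e = exp_hit x (fun _ => A)].

Definition t_mov (alpha : R) : \bar R :=
  ereal_sup [set e | exists (x : 'I_n) (A : nat -> {set 'I_n}),
                       (forall t, alpha <= piU (A t)) /\ e = exp_hit x A].

End LazyCycle.

(* Main.v *)
Require Import Defs.
From HB Require Import structures.
From mathcomp Require Import all_boot all_order all_algebra zify ring lra.
From mathcomp Require Import all_classical all_reals.
From mathcomp Require Import ereal topology normedtype sequences.
Set Implicit Arguments. Unset Strict Implicit. Unset Printing Implicit Defensive.
Import Order.TTheory GRing.Theory Num.Theory.

Section Comb.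
Variable n : nat.
Implicit Types (C Q D : {set 'I_n}).

Lemma val_iterS (y : 'I_n) k : val (iter k (@ordS n) y) = (y + k) %% n.
Proof.
elim: k => [|k IH] /=; first by rewrite addn0 modn_small.
by rewrite IH addnS -addn1 modnDml addn1.
Qed.

Lemma closed_full C y : y \in C -> (forall x, x \in C -> ordS x \in C) ->
  forall z, z \in C.
Proof.
move=> yC cl z.
have itC : forall k, iter k (@ordS n) y \in C.
  by elim=> [|k IH] //=; apply: cl.
have -> : z = iter (z + n - y) (@ordS n) y; last exact: itC.
apply/val_inj; rewrite val_iterS.
have hy := ltn_ord y; have hz := ltn_ord z.
rewrite (_ : y + (z + n - y) = z + n); last by lia.
by rewrite modnDr modn_small.
Qed.

Lemma closed_pred_full C y : y \in C -> (forall x, x \in C -> ord_pred x \in C) ->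
  forall z, z \in C.
Proof.
move=> yC cl z; apply/negPn/negP => zC.
have h : forall w, w \in ~: C.
  apply: (@closed_full (~: C) z); first by rewrite inE.
  move=> x; rewrite !inE => xC; apply/negP => SxC.
  by move: (cl _ SxC); rewrite ordSK (negbTE xC).
by move: (h y); rewrite inE yC.
Qed.

Definition Cp C := [set x | ordS x \in C].
Definition Cm C := [set x | ord_pred x \in C].

Lemma card_Cp C : #|Cp C| = #|C|.
Proof.
rewrite -(card_preimset C (can_inj (@ordSK n))).
by apply: eq_card => x; rewrite !inE.
Qed.

Lemma card_Cm C : #|Cm C| = #|C|.
Proof.
rewrite -(card_preimset C (can_inj (@ord_predK n))).
by apply: eq_card => x; rewrite !inE.
Qed.

Definition interior C := C :&: Cp C :&: Cm C.

Lemma not_full C : #|C| < n -> exists z, z \notin C.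
Proof.
move=> h; apply/existsP; rewrite -negb_forall; apply/negP => /forallP H.
have : #|'I_n| <= #|C| by apply: subset_leq_card; apply/fintype.subsetP=> x _; exact: H.
rewrite card_ord; lia.
Qed.

Lemma interior_card C : 2 <= #|C| < n -> #|interior C| <= #|C| - 2.
Proof.
move=> /andP[h2 hn].
have [z zC] := not_full hn.
have [y yC] : exists y, y \in C by apply/set0Pn; rewrite -card_gt0; lia.
have [a /andP[aC Sa]] : exists a, (a \in C) && (ordS a \notin C).
  have [/existsP//|/existsPn H] := boolP [exists a, (a \in C) && (ordS a \notin C)].
  exfalso; suff: z \in C by rewrite (negbTE zC).
  apply: (@closed_full C y yC) => x xC; move: (H x); rewrite xC /= => /negPn; done.
have [b /andP[bC Pb]] : exists b, (b \in C) && (ord_pred b \notin C).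
  have [/existsP//|/existsPn H] := boolP [exists b, (b \in C) && (ord_pred b \notin C)].
  exfalso; suff: z \in C by rewrite (negbTE zC).
  apply: (@closed_pred_full C y yC) => x xC; move: (H x); rewrite xC /= => /negPn; done.
have sub : forall a' b', a' \in C -> ordS a' \notin C -> b' \in C -> ord_pred b' \notin C ->
    a' != b' -> #|interior C| <= #|C| - 2.
  move=> a' b' a'C Sa' b'C Pb' ne.
  have : interior C \subset C :\ a' :\ b'.
    apply/fintype.subsetP => x; rewrite !inE => /andP[/andP[xC Sx] Px].
    rewrite xC andbT; apply/andP; split.
      by apply/eqP => e; move: Px; rewrite e (negbTE Pb').
    by apply/eqP => e; move: Sx; rewrite e (negbTE Sa').
  move/subset_leq_card => h.
  rewrite (cardsD1 a' C) a'C (cardsD1 b' (C :\ a')) !inE b'C eq_sym ne /=.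
  apply: (leq_trans h); rewrite !add1n subn2; exact: leqnn.
case: (eqVneq a b) => [eab|neab]; last exact: sub neab.
subst b.
case: (boolP [exists a', (a' \in C) && (ordS a' \notin C) && (a' != a)]).
  by move/existsP=> [a' /andP[/andP[a'C Sa'] ne]]; exact: sub a' a a'C Sa' aC Pb ne.
move=> /existsPn noA.
have C'ne : exists w, w \in C :\ a.
  apply/set0Pn; rewrite -card_gt0 (cardsD1 a) aC in h2 *; lia.
have [w wC'] := C'ne.
have full := @closed_full (C :\ a) w wC'.
have : forall x, x \in C :\ a -> ordS x \in C :\ a.
  move=> x; rewrite !inE => /andP[xa xC].
  have SxC : ordS x \in C.
    move: (noA x); rewrite xC xa /= andbT => /negPn; done.
  rewrite SxC andbT; apply/eqP => e.
  by move: Pb; rewrite -e ordSK xC.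
move/full => all.
have : #|'I_n| <= #|C :\ a|.
  by apply: subset_leq_card; apply/fintype.subsetP => x _; exact: all.
rewrite card_ord.
rewrite (cardsD1 a) aC in hn; lia.
Qed.

Lemma sum_in_card Q D : \sum_(x in Q) ((x \in D) : nat) = #|Q :&: D|.
Proof.
rewrite -sum1_card big_mkcond [RHS]big_mkcond /=; apply: eq_bigr => x _.
by rewrite inE; case: (x \in Q); case: (x \in D).
Qed.

Lemma card_eq_sub Q D : #|Q :&: D| = #|Q| -> Q \subset D.
Proof.
move=> h; apply/finset.setIidPl/eqP; rewrite eqEcard subsetIl h leqnn //.
Qed.

Lemma card_eq_sub2 Q D : #|Q :&: D| = #|D| -> D \subset Q.
Proof.
move=> h; apply/finset.setIidPr/eqP; rewrite eqEcard subsetIr h leqnn //.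
Qed.

Definition cnt C x : nat := 2 * (x \in C) + (ordS x \in C) + (ord_pred x \in C).

Lemma arith t u a b c : 1 <= t -> a <= minn u t -> b <= minn u t -> c <= minn u t ->
  (u = t - 1 -> 2 <= t -> ~~ [&& a == u, b == u & c == u]) ->
  (u = t -> a < t \/ (b < t /\ c < t)) ->
  (u = t + 1 -> ~~ [&& a == t, b == t & c == t]) ->
  2 * a + b + c + (t == 1) * minn u 1 <= minn u (t - 2) + 2 * minn u t + minn u (t + 2).
Proof.
move=> t1 ha hb hc i1 i2 i3.
case: (ltngtP u (t-1)) => hu.
- by case: (t =P 1) => ht; lia.
- case: (ltngtP u t) => hu2.
  + lia.
  + case: (ltngtP u (t+1)) => hu3.
    * lia.
    * by case: (t =P 1) => ht; lia.
    * by have := i3 hu3; case: (t =P 1) => ht; lia.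
  + by have := i2 hu2; case: (t =P 1) => ht; lia.
- case: (t =P 1) => ht; first lia.
  by have := i1 hu; lia.
Qed.

Lemma subCp_full C : 0 < #|C| -> C \subset Cp C -> #|C| = n.
Proof.
move=> h0 sub; have [y yC] : exists y, y \in C by apply/set0Pn; rewrite -card_gt0.
have all := @closed_full C y yC.
have : #|'I_n| <= #|C|.
  apply: subset_leq_card; apply/fintype.subsetP => x _; apply: all => z zC.
  by move/fintype.subsetP: sub => /(_ z zC); rewrite inE.
by rewrite card_ord => h; apply/eqP; rewrite eqn_leq h andbT; have := max_card (mem C); rewrite card_ord.
Qed.

Lemma subCm_full C : 0 < #|C| -> C \subset Cm C -> #|C| = n.
Proof.
move=> h0 sub; have [y yC] : exists y, y \in C by apply/set0Pn; rewrite -card_gt0.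
have all := @closed_pred_full C y yC.
have : #|'I_n| <= #|C|.
  apply: subset_leq_card; apply/fintype.subsetP => x _; apply: all => z zC.
  by move/fintype.subsetP: sub => /(_ z zC); rewrite inE.
by rewrite card_ord => h; apply/eqP; rewrite eqn_leq h andbT; have := max_card (mem C); rewrite card_ord.
Qed.

Lemma sum_cnt C Q : \sum_(x in Q) cnt C x =
  2 * #|Q :&: C| + #|Q :&: Cp C| + #|Q :&: Cm C|.
Proof.
rewrite /cnt !big_split /= big1_eq addn0 !sum_in_card.
have -> : \sum_(i in Q) ((ordS i \in C) : nat) = #|Q :&: Cp C|.
  by rewrite -sum_in_card; apply: eq_bigr => x _; rewrite inE.
have -> : \sum_(i in Q) ((ord_pred i \in C) : nat) = #|Q :&: Cm C|.
  by rewrite -sum_in_card; apply: eq_bigr => x _; rewrite inE.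
by rewrite mul2n -addnn.
Qed.

Lemma comb C Q : 1 <= #|C| < n -> #|Q| < n ->
  \sum_(x in Q) cnt C x + (#|C| == 1) * minn #|Q| 1 <=
  minn #|Q| (#|C| - 2) + 2 * minn #|Q| #|C| + minn #|Q| (#|C| + 2).
Proof.
move=> /andP[t1 tn] un; rewrite sum_cnt.
have hmin : forall D, #|D| = #|C| -> #|Q :&: D| <= minn #|Q| #|C|.
  move=> D hD; rewrite leq_min subset_leq_card ?subsetIl //= -hD subset_leq_card ?subsetIr //.
apply: arith => //; try apply: hmin => //; rewrite ?card_Cp ?card_Cm //.
- move=> hu ht; apply/negP => /and3P[/eqP ha /eqP hb /eqP hc].
  have : Q \subset interior C.
    rewrite /interior !finset.subsetI !card_eq_sub //.
  move/subset_leq_card; have := interior_card (C := C); rewrite ht tn => /(_ isT) h1 h2.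
  have := leq_trans h2 h1; rewrite hu; lia.
- move=> hu; case: (ltngtP #|Q :&: C| #|C|) => ha; [by left| |].
  + by have := subset_leq_card (subsetIr Q C); lia.
  + right; have QC : Q = C.
      by apply/eqP; rewrite eqEcard card_eq_sub ?hu ?ha //= hu.
    subst Q; split.
    * rewrite ltn_neqAle -{2}(card_Cp C) subset_leq_card ?subsetIr // andbT.
      apply/eqP => hb; have := subCp_full t1 (card_eq_sub hb); lia.
    * rewrite ltn_neqAle -{2}(card_Cm C) subset_leq_card ?subsetIr // andbT.
      apply/eqP => hc; have := subCm_full t1 (card_eq_sub hc); lia.
- move=> hu; apply/negP => /and3P[/eqP ha /eqP hb /eqP hc].
  have s1 := card_eq_sub2 ha.
  have s2 := card_eq_sub2 (etrans hb (esym (card_Cp C))).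
  have s3 := card_eq_sub2 (etrans hc (esym (card_Cm C))).
  have : ~: Q \subset interior (~: C).
    apply/fintype.subsetP => x; rewrite !inE => xQ.
    apply/andP; split; [apply/andP; split|].
    + by apply/negP => xC; move/fintype.subsetP: s1 => /(_ x xC); rewrite (negbTE xQ).
    + by apply/negP => xC; move/fintype.subsetP: s2 => /(_ x); rewrite inE => /(_ xC); rewrite (negbTE xQ).
    + by apply/negP => xC; move/fintype.subsetP: s3 => /(_ x); rewrite inE => /(_ xC); rewrite (negbTE xQ).
  move/subset_leq_card.
  have cC := cardsC C; have cQ := cardsC Q; rewrite card_ord in cC cQ.
  have := interior_card (C := ~: C).
  have -> : 2 <= #|~: C| < n by apply/andP; split; lia.
  move=> /(_ isT) h1 h2; have := leq_trans h2 h1; lia.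
Qed.
End Comb.

Local Open Scope ring_scope.

Section Core.
Variables (R : realType) (n : nat) (x0 : 'I_n).
Implicit Types (q : 'I_n -> R).

Definition srt q := sort (fun x y => q y <= q x) (enum 'I_n).

Lemma size_srt q : size (srt q) = n.
Proof. by rewrite size_sort size_enum_ord. Qed.

Lemma uniq_srt q : uniq (srt q).
Proof. by rewrite sort_uniq enum_uniq. Qed.

Lemma mem_srt q x : x \in srt q.
Proof. by rewrite mem_sort mem_enum. Qed.

Lemma sorted_srt q : sorted (fun x y => q y <= q x) (srt q).
Proof. by apply: sort_sorted => x y; exact: le_total. Qed.

Lemma srt_mono q i j : (i <= j < n)%N -> q (nth x0 (srt q) j) <= q (nth x0 (srt q) i).
Proof.
move=> /andP[ij jn].
have tr : transitive (fun x y : 'I_n => q y <= q x).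
  move=> x y z /= h1 h2; exact: le_trans h2 h1.
have rf : reflexive (fun x y : 'I_n => q y <= q x) by move=> x /=.
apply: (sorted_leq_nth tr rf x0 (sorted_srt q)) => //; rewrite inE size_srt //; lia.
Qed.

Lemma sum_all q (F : 'I_n -> R) : \sum_x F x = \sum_(0 <= i < n) F (nth x0 (srt q) i).
Proof.
have hp : perm_eq (srt q) (enum 'I_n) by rewrite /srt perm_sort.
have -> : \sum_(0 <= i < n) F (nth x0 (srt q) i) = \sum_(0 <= i < size (srt q)) F (nth x0 (srt q) i) by rewrite size_srt.
rewrite -(big_nth x0 xpredT F) (perm_big _ hp) /= big_enum.
by apply: eq_bigl => x; rewrite inE.
Qed.


Definition pre q j := [set x | (index x (srt q) < j)%N].

Lemma index_nth_srt q i : (i < n)%N -> index (nth x0 (srt q) i) (srt q) = i.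
Proof. by move=> hi; rewrite index_uniq ?uniq_srt ?size_srt. Qed.

Lemma nth_index_srt q x : nth x0 (srt q) (index x (srt q)) = x.
Proof. by rewrite nth_index ?mem_srt. Qed.

Lemma index_lt q x : (index x (srt q) < n)%N.
Proof. by move: (index_mem x (srt q)); rewrite mem_srt size_srt. Qed.

Lemma sum_pre q (F : 'I_n -> R) j : (j <= n)%N ->
  \sum_(x in pre q j) F x = \sum_(0 <= i < j) F (nth x0 (srt q) i).
Proof.
move=> jn; rewrite big_mkcond (sum_all q) /= (big_nat_widen 0 j n) //.
rewrite [RHS]big_mkcondr; rewrite big_nat_cond [RHS]big_nat_cond.
apply: eq_bigr => i /andP[/andP[_ hi] _]; rewrite inE index_nth_srt //.
Qed.

Lemma card_pre q j : (j <= n)%N -> #|pre q j| = j.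
Proof.
move=> jn; apply/eqP; rewrite -(eqr_nat R) -[X in X == _]mulr1n -sumr_const sum_pre //.
by rewrite sumr_const_nat subn0.
Qed.

Definition a q i : R := if (i < n)%N then q (nth x0 (srt q) i) else 0.
Definition T q l : R := \sum_(0 <= i < n) ((i < l)%N%:R) * a q i.

Lemma T_pre q l : (l <= n)%N -> T q l = \sum_(x in pre q l) q x.
Proof.
move=> ln; rewrite sum_pre // /T (big_nat_widen 0 l n) //.
rewrite big_mkcondr [LHS]big_nat_cond [RHS]big_nat_cond.
apply: eq_bigr => i /andP[/andP[_ hi] _]; rewrite /a hi.
by case: (i < l)%N; rewrite ?mul1r ?mul0r.
Qed.

Lemma T_all q l : (n <= l)%N -> T q l = \sum_x q x.
Proof.
move=> nl; rewrite (sum_all q) /T big_nat_cond [RHS]big_nat_cond.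
apply: eq_bigr => i /andP[/andP[_ hi] _]; rewrite /a hi.
have -> : (i < l)%N by lia.
by rewrite /= mul1r.
Qed.

Lemma abel (u v : nat -> R) N : \sum_(0 <= i < N) u i * v i =
  \sum_(0 <= i < N) (u i - u i.+1) * (\sum_(0 <= k < i.+1) v k) + u N * \sum_(0 <= k < N) v k.
Proof.
elim: N => [|N IH]; first by rewrite !big_geq // mulr0 addr0.
rewrite !big_nat_recr //= IH; ring.
Qed.

Lemma sum_ind_lt N l : \sum_(0 <= k < N) ((k < l)%N%:R : R) = (minn N l)%:R.
Proof.
elim: N => [|N IH]; first by rewrite big_geq // min0n.
rewrite big_nat_recr //= IH -natrD; congr (_%:R).
case: (ltnP N l) => h; lia.
Qed.

Lemma T_abel q l : T q l = \sum_(0 <= i < n) (a q i - a q i.+1) * (minn i.+1 l)%:R.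
Proof.
rewrite /T (eq_bigr (fun i => a q i * (i < l)%N%:R)); last by move=> i _; rewrite mulrC.
have an : a q n = 0 by rewrite /a ltnn.
rewrite [LHS]abel an mul0r addr0; apply: eq_bigr => i _; by rewrite sum_ind_lt.
Qed.


Lemma a_ge0 q i : (forall x, 0 <= q x) -> 0 <= a q i.
Proof. by move=> h; rewrite /a; case: ifP. Qed.

Lemma a_mono q i : (i.+1 < n)%N -> a q i.+1 <= a q i.
Proof.
move=> hi; rewrite /a hi (_ : (i < n)%N); last by lia.
apply: srt_mono; lia.
Qed.

Lemma a_last q z : (forall x, 0 <= q x) -> q z = 0 -> a q n.-1 = 0.
Proof.
move=> h0 hz; have hzn := index_lt q z.
rewrite /a (_ : (n.-1 < n)%N); last by lia.
apply/le_anti; rewrite h0 andbT.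
have := @srt_mono q (index z (srt q)) n.-1; rewrite nth_index_srt hz; apply; lia.
Qed.

Definition G (t u : nat) : R := (minn u (t - 2))%:R + 2 * (minn u t)%:R + (minn u (t + 2))%:R
  - (t == 1)%:R * (minn u 1)%:R.

Lemma core q (C : {set 'I_n}) : (forall x, 0 <= q x) -> (exists z, q z = 0) -> (1 <= #|C| < n)%N ->
  \sum_x q x * (cnt C x)%:R <=
  T q (#|C| - 2) + 2 * T q #|C| + T q (#|C| + 2) - (#|C| == 1)%:R * T q 1.
Proof.
move=> q0 [z qz] tC.
set t := #|C|.
have E : T q (t - 2) + 2 * T q t + T q (t + 2) - (t == 1)%:R * T q 1 =
   \sum_(0 <= i < n) (a q i - a q i.+1) * G t i.+1.
  rewrite !T_abel !mulr_sumr -!big_split -sumrB /=; apply: eq_bigr => i _.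
  rewrite /G; ring.
rewrite E (sum_all q).
rewrite (eq_big_nat _ _ (F2 := fun i => a q i * (cnt C (nth x0 (srt q) i))%:R)); last first.
  by move=> i /andP[_ hi]; rewrite /a hi.
have an : a q n = 0 by rewrite /a ltnn.
rewrite [X in X <= _]abel an mul0r addr0.
rewrite big_nat_cond [X in _ <= X]big_nat_cond; apply: ler_sum => i /andP[/andP[_ hi] _].
case: (ltnP i.+1 n) => hin.
- apply: ler_wpM2l; first by rewrite subr_ge0 a_mono.
  rewrite -(sum_pre q (fun x => (cnt C x)%:R)) // -natr_sum.
  have := comb (Q := pre q i.+1) tC; rewrite card_pre // => /(_ hin) h.
  rewrite -/t in h.
  have hR := h; rewrite -(ler_nat R) !natrD !natrM in hR.
  rewrite /G; lra.
- have -> : i = n.-1 by lia.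
  rewrite (a_last q0 qz) (_ : n.-1.+1 = n); last by lia.
  by rewrite /a ltnn subrr !mul0r.
Qed.

Lemma a_supp q (S : {set 'I_n}) m i : (forall x, 0 <= q x) -> (forall x, x \notin S -> q x = 0) ->
  (#|S| <= m)%N -> (m <= i)%N -> a q i = 0.
Proof.
move=> q0 qS Sm mi; rewrite /a; case: ifP => // hi.
apply/le_anti; rewrite q0 andbT leNgt; apply/negP => pos.
have : pre q i.+1 \subset S.
  apply/fintype.subsetP => x; rewrite inE => hx; apply/negPn/negP => xS.
  have := @srt_mono q (index x (srt q)) i; rewrite nth_index_srt (qS x xS) => h.
  by have := h ltac:(lia); rewrite leNgt pos.
move/subset_leq_card => h; have := leq_trans h Sm; rewrite card_pre; lia.
Qed.

Lemma T_supp q (S : {set 'I_n}) m l : (forall x, 0 <= q x) -> (forall x, x \notin S -> q x = 0) ->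
  (#|S| <= m)%N -> (m <= l)%N -> T q l = \sum_x q x.
Proof.
move=> q0 qS Sm ml; rewrite (sum_all q) /T big_nat_cond [RHS]big_nat_cond.
apply: eq_bigr => i /andP[/andP[_ hi] _].
have -> : q (nth x0 (srt q) i) = a q i by rewrite /a hi.
case: (ltnP i l) => h; first by rewrite mul1r.
by rewrite (a_supp q0 qS Sm (leq_trans ml h)) mulr0.
Qed.

Lemma T_ge0 q l : (forall x, 0 <= q x) -> 0 <= T q l.
Proof.
move=> q0; apply: sumr_ge0 => i _; apply: mulr_ge0 => //; exact: a_ge0.
Qed.

Lemma T_le q l : (forall x, 0 <= q x) -> T q l <= \sum_x q x.
Proof.
move=> q0; rewrite (sum_all q) /T big_nat_cond [X in _ <= X]big_nat_cond.
apply: ler_sum => i /andP[/andP[_ hi] _].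
have -> : q (nth x0 (srt q) i) = a q i by rewrite /a hi.
case: (i < l)%N; rewrite ?mul1r ?mul0r //; exact: a_ge0.
Qed.

End Core.


Section Dyn.
Variables (R : realType) (n : nat).

Lemma sum_delta (a0 : 'I_n) (f : 'I_n -> R) : \sum_y (a0 == y)%:R * f y = f a0.
Proof.
rewrite (bigD1 a0) //= eqxx mul1r big1 ?addr0 // => y ya.
by rewrite eq_sym (negbTE ya) mul0r.
Qed.

Lemma lazyP_E (z y : 'I_n) : lazyP R z y =
  (z == y)%:R / 2 + (ordS z == y)%:R / 4 + (ord_pred z == y)%:R / 4.
Proof. by []. Qed.

Lemma sumP (z : 'I_n) (f : 'I_n -> R) :
  \sum_y lazyP R z y * f y = f z / 2 + f (ordS z) / 4 + f (ord_pred z) / 4.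
Proof.
rewrite (eq_bigr (fun y => (z == y)%:R * f y / 2 + (ordS z == y)%:R * f y / 4
   + (ord_pred z == y)%:R * f y / 4)); last first.
  by move=> y _; rewrite lazyP_E; ring.
by rewrite !big_split /= -!mulr_suml !sum_delta.
Qed.

Lemma sumP1 (z : 'I_n) : \sum_y lazyP R z y = 1.
Proof.
have := sumP z (fun _ => 1); under eq_bigr do rewrite mulr1; move=> ->; lra.
Qed.

Lemma sumPC (z : 'I_n) (C : {set 'I_n}) :
  \sum_(y in C) lazyP R z y = (cnt C z)%:R / 4.
Proof.
rewrite big_mkcond /= (eq_bigr (fun y => lazyP R z y * (y \in C)%:R)); last first.
  by move=> y _; case: (y \in C); rewrite ?mulr1 ?mulr0.
rewrite sumP /cnt !natrD addr0; lra.
Qed.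


Lemma lazyP_ge0 (z y : 'I_n) : 0 <= lazyP R z y.
Proof. rewrite lazyP_E; apply: addr_ge0; [apply: addr_ge0|]; apply: divr_ge0 => //. Qed.

Lemma ident (Tf : nat -> R) (b K : nat) : (b == 1)%N || (b == 2)%N -> Tf 0%N = 0 ->
  \sum_(0 <= j < K.+1) (b + 2 * j)%:R * (Tf (b + 2 * j - 2)%N + 2 * Tf (b + 2 * j)%N
      + Tf (b + 2 * j + 2)%N - (b + 2 * j == 1)%N%:R * Tf 1%N)
  = 4 * \sum_(0 <= j < K.+1) (b + 2 * j)%:R * Tf (b + 2 * j)%N
    - ((b + 2 * K)%:R + 2) * Tf (b + 2 * K)%N + (b + 2 * K)%:R * Tf (b + 2 * K + 2)%N.
Proof.
move=> hb T0; elim: K => [|K IH].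
  rewrite !big_nat1 !muln0 !addn0.
  by case/orP: hb => /eqP ->; rewrite /= ?T0; lra.
rewrite big_nat_recr //= IH [X in _ = 4 * X - _ + _]big_nat_recr //=.
set M := (b + 2 * K)%N.
have e1 : (b + 2 * K.+1 - 2 = M)%N by rewrite /M; lia.
have e2 : (b + 2 * K.+1 = M + 2)%N by rewrite /M; lia.
have e3 : (M + 2 == 1)%N = false by rewrite /M; lia.
rewrite e1 e2 e3 (natrD _ M 2) /=; ring.
Qed.

Section Surv.
Variables (x : 'I_n) (A : nat -> {set 'I_n}).
Local Notation qv := (surv_vec R x A).

Lemma surv_ge0 t y : 0 <= qv t y.
Proof.
elim: t y => [|t IH] y /=; first by case: (_ && _).
apply: mulr_ge0 => //; apply: sumr_ge0 => z _; apply: mulr_ge0 => //; exact: lazyP_ge0.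
Qed.

Lemma surv_A t y : y \in A t -> qv t y = 0.
Proof.
by case: t => [|t] /= yA; rewrite yA ?andbF //= mul0r.
Qed.

Lemma surv_le t y : qv t.+1 y <= \sum_z qv t z * lazyP R z y.
Proof.
rewrite /=; case: (y \in A t.+1); rewrite /= ?mul0r ?mul1r //.
by apply: sumr_ge0 => z _; apply: mulr_ge0; [exact: surv_ge0|exact: lazyP_ge0].
Qed.

Lemma surv_mass t : \sum_y qv t.+1 y <= \sum_y qv t y.
Proof.
apply: (le_trans (ler_sum _ (fun y _ => surv_le t y))).
rewrite exchange_big /=; apply: ler_sum => z _.
by rewrite -mulr_sumr sumP1 mulr1.
Qed.

Lemma surv_C t (C : {set 'I_n}) :
  \sum_(y in C) qv t.+1 y <= \sum_z qv t z * (cnt C z)%:R / 4.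
Proof.
apply: (le_trans (ler_sum _ (fun y _ => surv_le t y))).
rewrite exchange_big /=; apply: ler_sum => z _.
by rewrite -mulr_sumr sumPC mulrA.
Qed.

End Surv.

End Dyn.


Section Pot.
Variables (R : realType) (n' : nat).
Local Notation n := n'.+1.
Local Notation TT := (@T R n ord0).

Definition Fp (b K : nat) (q : 'I_n -> R) :=
  \sum_(0 <= j < K.+1) (b + 2 * j)%:R * TT q (b + 2 * j)%N.

Lemma step (q q' : 'I_n -> R) (b K : nat) (S : {set 'I_n}) :
  (b == 1)%N || (b == 2)%N -> (b + 2 * K < n)%N ->
  (forall x, 0 <= q x) -> (forall x, 0 <= q' x) ->
  (#|S| <= b + 2 * K)%N -> (forall x, x \notin S -> q x = 0) ->
  (forall C : {set 'I_n}, \sum_(y in C) q' y <= \sum_z q z * (cnt C z)%:R / 4) ->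
  Fp b K q' + (\sum_x q x) / 2 <= Fp b K q.
Proof.
move=> hb hm q0 q'0 Sm qS hC.
have hz : exists z, q z = 0.
  have [z zS] := @not_full n S ltac:(lia).
  by exists z; apply: qS.
have T0 : TT q 0 = 0 by rewrite T_abel; apply: big1 => i _; rewrite minn0 mulr0.
have le1 : Fp b K q' <= \sum_(0 <= j < K.+1) (b + 2 * j)%:R *
    ((TT q (b + 2 * j - 2)%N + 2 * TT q (b + 2 * j)%N + TT q (b + 2 * j + 2)%N
       - (b + 2 * j == 1)%N%:R * TT q 1%N) / 4).
  rewrite /Fp big_nat_cond [X in _ <= X]big_nat_cond.
  apply: ler_sum => j /andP[/andP[_ hj] _].
  apply: ler_wpM2l => //.
  have hs : (b + 2 * j <= n)%N by lia.
  rewrite T_pre //.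
  apply: (le_trans (hC _)).
  rewrite -mulr_suml ler_pM2r ?invr_gt0 //.
  have hc := @core R n ord0 q (pre q' (b + 2 * j)) q0 hz.
  rewrite (card_pre ord0 q' hs) in hc; apply: hc; lia.
apply: (le_trans (lerD le1 (lexx _))).
rewrite (eq_bigr (fun j => ((b + 2 * j)%:R *
    (TT q (b + 2 * j - 2)%N + 2 * TT q (b + 2 * j)%N + TT q (b + 2 * j + 2)%N
       - (b + 2 * j == 1)%N%:R * TT q 1%N)) / 4)); last by move=> j _; rewrite mulrA.
rewrite -mulr_suml ident //.
rewrite (T_supp ord0 q0 qS Sm (leqnn _)) (T_supp ord0 q0 qS Sm (leq_addr _ _)) /Fp.
lra.
Qed.


Lemma Fp_ge0 b K q : (forall x, 0 <= q x) -> 0 <= Fp b K q.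
Proof. move=> q0; apply: sumr_ge0 => j _; apply: mulr_ge0 => //; exact: T_ge0. Qed.

Lemma Fp_le b K q : (forall x, 0 <= q x) -> \sum_x q x <= 1 ->
  Fp b K q <= \sum_(0 <= j < K.+1) (b + 2 * j)%:R.
Proof.
move=> q0 q1; apply: ler_sum => j _; rewrite -{2}[(b + 2 * j)%:R]mulr1.
apply: ler_wpM2l => //; exact: le_trans (T_le _ _ q0) q1.
Qed.

Lemma surv0_le1 x (A : nat -> {set 'I_n}) : \sum_y surv_vec R x A 0 y <= 1.
Proof.
have <- : \sum_y (x == y)%:R * (1:R) = 1 := sum_delta x (fun _ => 1).
apply: ler_sum => y _ /=; rewrite mulr1 eq_sym.
by case: (x == y); case: (y \in A 0%N); rewrite /= ?ler_nat.
Qed.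

Lemma upper x (A : nat -> {set 'I_n}) b K :
  (b == 1)%N || (b == 2)%N -> (b + 2 * K < n)%N ->
  (forall t, #|~: A t| <= b + 2 * K)%N ->
  forall N, \sum_(0 <= t < N) surv_prob R x A t <= 2 * \sum_(0 <= j < K.+1) (b + 2 * j)%:R.
Proof.
move=> hb hm hA N.
have st : forall t, Fp b K (surv_vec R x A t.+1) + surv_prob R x A t / 2 <=
    Fp b K (surv_vec R x A t).
  move=> t; apply: (step (S := ~: A t)) => //.
  - exact: surv_ge0.
  - exact: surv_ge0.
  - by move=> y; rewrite inE negbK; exact: surv_A.
  - exact: surv_C.
have tel : forall N, \sum_(0 <= t < N) surv_prob R x A t / 2 + Fp b K (surv_vec R x A N)
    <= Fp b K (surv_vec R x A 0).
  elim=> [|N' IH]; first by rewrite big_geq // add0r.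
  rewrite big_nat_recr //=; have := st N'; lra.
have := tel N.
have := Fp_ge0 b K (@surv_ge0 R n x A N).
have := Fp_le b K (@surv_ge0 R n x A 0) (surv0_le1 x A).
rewrite -mulr_suml; lra.
Qed.

Lemma upper0 x (A : nat -> {set 'I_n}) : (forall t, #|~: A t| = 0)%N ->
  forall t, surv_prob R x A t = 0.
Proof.
move=> hA t; apply: big1 => y _; apply: surv_A.
have := hA t; move/eqP; rewrite cards_eq0 => /eqP h.
have : y \notin ~: A t by rewrite h inE.
by rewrite inE negbK.
Qed.

End Pot.


Section Low.
Variables (R : realType) (n' : nat) (m : nat).
Local Notation n := n'.+1.
Hypothesis mn : (m < n)%N.

Definition hv (y : 'I_n) : R := 2 * ((y.+1 * (m - y))%N)%:R.

Lemma hv_ge0 (y : 'I_n) : 0 <= hv y.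
Proof. by rewrite /hv mulr_ge0. Qed.

Lemma hv_A (y : 'I_n) : (m <= y)%N -> hv y = 0.
Proof. by move=> h; rewrite /hv (_ : (m - y = 0)%N) ?muln0 ?mulr0 //; lia. Qed.

Lemma harm (z : 'I_n) : (z < m)%N -> hv z / 2 + hv (ordS z) / 4 + hv (ord_pred z) / 4 = hv z - 1.
Proof.
move=> zm.
have hz := ltn_ord z.
set v := nat_of_ord z.
have [e he] : exists e, m = (v + 1 + e)%N by exists (m - v - 1)%N; lia.
have h1 : hv z = 2 * ((v + 1) * (e + 1))%N%:R.
  by rewrite /hv -/v (_ : (m - v = e + 1)%N) ?addn1 //; lia.
have h2 : hv (ordS z) = 2 * ((v + 2) * e)%N%:R.
  rewrite /hv /= modn_small; last by lia.
  by rewrite (_ : (m - v.+1 = e)%N) ?addn2 //; lia.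
have h3 : hv (ord_pred z) = 2 * (v * (e + 2))%N%:R.
  rewrite /hv /=; case: (posnP v) => v0.
    have -> : ((z + n).-1 %% n = n')%N by rewrite -/v v0 /= modn_small.
    by rewrite (_ : (m - n' = 0)%N) ?muln0 ?v0 ?mul0n //; lia.
  have -> : ((z + n).-1 %% n = v.-1)%N.
    rewrite -/v (_ : ((v + n).-1 = v.-1 + n)%N); last by lia.
    by rewrite modnDr modn_small //; lia.
  have -> : (v.-1.+1 = v)%N by lia.
  have -> : (m - v.-1 = e + 2)%N by lia.
  by [].
rewrite h1 h2 h3 !natrM !natrD; lra.
Qed.


Definition A0 : {set 'I_n} := [set y : 'I_n | (m <= y)%N].

Variable x0 : 'I_n.
Hypothesis x0m : (x0 < m)%N.
Local Notation q := (surv_vec R x0 (fun _ => A0)).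

Lemma stat_step t : \sum_y q t.+1 y * hv y + surv_prob R x0 (fun _ => A0) t =
  \sum_y q t y * hv y.
Proof.
have e1 : \sum_y q t.+1 y * hv y = \sum_y (\sum_z q t z * lazyP R z y) * hv y.
  apply: eq_bigr => y _ /=; case: (boolP (y \in A0)) => yA /=.
    by rewrite hv_A ?mulr0 //; move: yA; rewrite inE.
  by rewrite mul1r.
have e2 : \sum_y (\sum_z q t z * lazyP R z y) * hv y = \sum_z q t z * (hv z - 1).
  rewrite (eq_bigr (fun y => \sum_z q t z * lazyP R z y * hv y)); last first.
    by move=> y _; rewrite mulr_suml.
  rewrite exchange_big /=; apply: eq_bigr => z _.
  rewrite (eq_bigr (fun y => q t z * (lazyP R z y * hv y))); last by move=> y _; rewrite mulrA.
  rewrite -mulr_sumr sumP.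
  case: (boolP (z \in A0)) => zA.
    by rewrite (@surv_A R n x0 (fun _ => A0) t z zA) !mul0r.
  by rewrite harm //; move: zA; rewrite inE -ltnNge.
rewrite e1 e2 /surv_prob.
rewrite (eq_bigr (fun z => q t z * hv z - q t z)); last by move=> z _; rewrite mulrBr mulr1.
by rewrite sumrB subrK.
Qed.

Lemma stat_tel N : \sum_(0 <= t < N) surv_prob R x0 (fun _ => A0) t + \sum_y q N y * hv y = hv x0.
Proof.
elim: N => [|N IH].
  rewrite big_geq // add0r -(sum_delta x0 hv); apply: eq_bigr => y _ /=.
  case: (eqVneq y x0) => [->|ne].
    by rewrite /= inE -ltnNge x0m.
  by [].
rewrite big_nat_recr //= -IH -(stat_step N); lra.
Qed.


Local Notation p := (surv_prob R x0 (fun _ => A0)).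

Lemma p_ge0 t : 0 <= p t.
Proof. by apply: sumr_ge0 => y _; exact: surv_ge0. Qed.

Lemma p_mono t N : (t <= N)%N -> p N <= p t.
Proof.
move=> tN; rewrite -(subnK tN); elim: (N - t)%N => [|k IH]; first by rewrite add0n.
by apply: le_trans IH; rewrite addSn; exact: surv_mass.
Qed.

Lemma lower : ((hv x0)%:E <= exp_hit R x0 (fun _ => A0))%E.
Proof.
set H := \sum_y hv y.
have H0 : 0 <= H by apply: sumr_ge0 => y _; exact: hv_ge0.
have qh : forall N, \sum_y q N y * hv y <= p N * H.
  move=> N; rewrite /surv_prob mulr_suml; apply: ler_sum => y _.
  apply: ler_wpM2l; first exact: surv_ge0.
  by rewrite /H (bigD1 y) //= lerDl; apply: sumr_ge0 => z _; exact: hv_ge0.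
have qh0 : forall N, 0 <= \sum_y q N y * hv y.
  by move=> N; apply: sumr_ge0 => y _; apply: mulr_ge0; [exact: surv_ge0|exact: hv_ge0].
have bnd : forall N, N.+1%:R * p N <= hv x0.
  move=> N; rewrite -(stat_tel N.+1).
  have : N.+1%:R * p N <= \sum_(0 <= t < N.+1) p t.
    have -> : N.+1%:R * p N = \sum_(0 <= t < N.+1) p N by rewrite sumr_const_nat subn0 mulr_natl.
    apply: ler_sum_nat => t /andP[_ ht].
    by apply: p_mono.
  have := qh0 N.+1; lra.
have SN : forall N, hv x0 - H * p N <= \sum_(0 <= t < N) p t.
  by move=> N; have := stat_tel N; have := qh N; lra.
have ge : forall N, ((\sum_(0 <= t < N) p t)%:E <= exp_hit R x0 (fun _ => A0))%E.
  move=> N; rewrite /exp_hit -sumEFin.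
  apply: (@nneseries_lim_ge R (fun t => (p t)%:E) xpredT 0 N) => k _ _.
  by rewrite lee_fin p_ge0.
case E : (exp_hit R x0 (fun _ => A0)) => [r| |] //.
- rewrite lee_fin; rewrite leNgt; apply/negP => rlt.
  set N := Num.truncn (H * hv x0 / (hv x0 - r)).
  have hN := truncnS_gt (H * hv x0 / (hv x0 - r)); rewrite -/N in hN.
  have pos : 0 < hv x0 - r by lra.
  have := ge N; rewrite E lee_fin => h1.
  have h2 := SN N; have h3 := bnd N.
  have h4 : H * hv x0 < N.+1%:R * (hv x0 - r).
    by rewrite -ltr_pdivrMr.
  have h5 : hv x0 - r <= H * p N by lra.
  have : N.+1%:R * (hv x0 - r) <= N.+1%:R * (H * p N) by apply: ler_wpM2l.
  have : N.+1%:R * (H * p N) <= H * hv x0.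
    by rewrite mulrCA; apply: ler_wpM2l.
  lra.
- by rewrite leey.
- by have := ge 0%N; rewrite E big_geq.
Qed.

End Low.


Lemma sum_lt_nat N m : (\sum_(0 <= i < N) ((i < m) : nat) = minn N m)%N.
Proof.
elim: N => [|N IH]; first by rewrite big_geq // min0n.
rewrite big_nat_recr //= IH; case: (ltnP N m) => h; lia.
Qed.

Lemma card_lt n m : #|[set y : 'I_n | (y < m)%N]| = minn n m.
Proof.
rewrite -sum1_card big_mkcond /= (eq_bigr (fun i : 'I_n => ((i < m) : nat))); last first.
  by move=> i _; rewrite inE; case: (_ < _)%N.
by rewrite -(big_mkord xpredT (fun i => ((i < m) : nat))) sum_lt_nat.
Qed.

Lemma sum_odd (R : realType) b K :
  \sum_(0 <= j < K.+1) ((b + 2 * j)%:R : R) = (K.+1 * (b + K))%:R.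
Proof.
elim: K => [|K IH]; first by rewrite big_nat1 muln0 !addn0 mul1n.
rewrite big_nat_recr //= IH -natrD; congr (_%:R); lia.
Qed.

Theorem corollary1p3 (R : realType) (n : nat) (hn : (1 <= n)%N) (alpha : R)
  (ha0 : 0 < alpha) (ha1 : alpha < 1) :
  t_H n alpha = t_mov n alpha.
Proof.
case: n hn => [//|n'] _.
set n := n'.+1.
have n0 : (0 < n%:R :> R) by rewrite ltr0n.
pose P := fun j : 'I_n.+1 => alpha <= (j : nat)%:R / n%:R.
have P0 : P ord_max by rewrite /P /= divff ?ltW // gt_eqF.
case: (arg_minnP (fun j : 'I_n.+1 => nat_of_ord j) P0) => k Pk kmin.
have k1 : (1 <= k)%N.
  rewrite lt0n; apply/negP => /eqP k0; move: Pk; rewrite /P k0 mul0r.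
  by rewrite leNgt ha0.
have kn : (k <= n)%N by have := ltn_ord k.
set m := (n - k)%N.
have mn : (m < n)%N by rewrite /m; lia.
have adm : forall A : {set 'I_n}, alpha <= piU R A -> (#|~: A| <= m)%N.
  move=> A hA.
  have hAn : (#|A| < n.+1)%N by have := max_card (mem A); rewrite card_ord.
  have := kmin (inord #|A|); rewrite /P inordK // => /(_ hA) kA.
  have := cardsC A; rewrite card_ord /m; lia.
pose S0 := [set y : 'I_n | (y < m)%N].
have cS0 : #|S0| = m by rewrite card_lt; lia.
have A0E : A0 n' m = ~: S0 by apply/setP => y; rewrite !inE -leqNgt.
have A0adm : alpha <= piU R (A0 n' m).
  rewrite /piU A0E.
  have := cardsC S0; rewrite card_ord cS0 => h.
  have -> : #|~: S0| = k by rewrite /m in h; lia.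
  exact: Pk.
pose W : R := if m == 0%N then 0 else
  2 * (((m.-1)./2).+1 * (m - 2 * (m.-1)./2 + (m.-1)./2))%N%:R.
have up : forall x (A : nat -> {set 'I_n}), (forall t, alpha <= piU R (A t)) ->
    (exp_hit R x A <= W%:E)%E.
  move=> x A hA.
  have bound : forall N, \sum_(0 <= t < N) surv_prob R x A t <= W.
    move=> N; rewrite /W; case: eqP => m0.
      rewrite big1 // => t _; apply: upper0 => t'.
      by move: (adm _ (hA t')); rewrite m0 leqn0 => /eqP.
    set K := ((m.-1)./2)%N; set b := (m - 2 * K)%N.
    have hb : (b == 1)%N || (b == 2)%N by rewrite /b /K -divn2; lia.
    have hm : (m = b + 2 * K)%N by rewrite /b /K -divn2; lia.
    rewrite -sum_odd.
    apply: (@upper R n' x A b K hb); first by rewrite -hm.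
    by move=> t; rewrite -hm; apply: adm.
  rewrite /exp_hit; apply: lime_le.
    by apply: is_cvg_nneseries => t _ _; rewrite lee_fin; apply: sumr_ge0 => y _; exact: surv_ge0.
  by apply: nearW => N; rewrite sumEFin lee_fin.
have lo : (W%:E <= exp_hit R (inord ((m.-1)./2)) (fun _ => A0 n' m))%E.
  rewrite /W; case: eqP => m0.
    rewrite /exp_hit; apply: nneseries_ge0 => t _ _; rewrite lee_fin.
    by apply: sumr_ge0 => y _; exact: surv_ge0.
  set K := ((m.-1)./2)%N.
  have Km : (K < m)%N by rewrite /K -divn2; lia.
  have Kn : (K < n)%N by lia.
  have := @lower R n' m mn (inord K); rewrite inordK // => /(_ Km).
  rewrite /hv inordK //.
  have -> : (K.+1 * (m - K))%N = (K.+1 * (m - 2 * K + K))%N.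
    by congr (_ * _)%N; rewrite /K -divn2; lia.
  done.
apply/eqP; rewrite eq_le; apply/andP; split.
- apply: ereal_sup_le => e [x [A [hA ->]]].
  by exists x, (fun _ => A); split.
- apply: ge_ereal_sup => e [x [A [hA ->]]].
  apply: (le_trans (up x A hA)); apply: (le_trans lo).
  apply: ereal_sup_ubound; exists (inord ((m.-1)./2)), (A0 n' m); split => //.
Qed.
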